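(* Let $n\ge 1$, $\mathbb{K}$ a field, $S=\mathbb{K}[x_1,\dots,x_n]$, and \[M_n^{(1)}=\langle x_i^{\,n} : 1\le i\le n\rangle+\langle x_i^{\,n-1}x_j^{\,n-1} : 1\le i<j\le n\rangle\subset S .\] Let $\tilde{\mathcal Q}_{K_{n+1}}$ be the reduced signless Laplacian of the complete graph $K_{n+1}$, i.e. the $n\times n$ matrix with every diagonal entry equal to $n$ and every off-diagonal entry equal to $1$. Then \[\dim_{\mathbb{K}} S/M_n^{(1)}=\det \tilde{\mathcal Q}_{K_{n+1}} .\]
   Context: For a simple graph $G$ on vertex set $\{0,1,\dots,n\}$, the signless Laplacian $\mathcal Q_G$ is the $(n+1)\times(n+1)$ matrix with $(\mathcal Q_G)_{ii}=\deg(i)$ and, for $i\ne j$, $(\mathcal Q_G)_{ij}$ equal to the number of edges between $i$ and $j$; the reduced signless Laplacian $\tilde{\mathcal Q}_G$ is obtained by deleting the row and column of vertex $0$. The ideal $M_n^{(1)}$ is the $1$-skeleton ideal of $K_{n+1}$ (generated by $m_\sigma=\prod_{i\in\sigma}x_i^{\#\{j\notin\sigma:\ j\sim i\}}$ for $\sigma\subseteq\{1,\dots,n\}$, $1\le|\sigma|\le2$). *)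

(* Defs.v *)
From HB Require Import structures.
From mathcomp Require Import all_boot all_order all_algebra.
From mathcomp Require Import mpoly.
Set Implicit Arguments. Unset Strict Implicit. Unset Printing Implicit Defensive.
Import GRing.Theory.
Local Open Scope ring_scope.

Definition in_ideal (K : fieldType) (n : nat) (gens : seq {mpoly K[n]})
  (p : {mpoly K[n]}) : Prop :=
  exists c : 'I_(size gens) -> {mpoly K[n]},
    p = \sum_(i < size gens) c i * gens`_i.

(* dim_K (S / <gens>) = d : there are d polynomials whose classes form a
   K-basis of the quotient S/<gens> (spanning + linearly independent mod I). *)
Definition quot_dim (K : fieldType) (n : nat) (gens : seq {mpoly K[n]})
  (d : nat) : Prop :=
  exists b : 'I_d -> {mpoly K[n]},
    (forall p : {mpoly K[n]}, exists a : 'I_d -> K,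
        in_ideal gens (p - \sum_(i < d) a i *: b i)) /\
    (forall a : 'I_d -> K, in_ideal gens (\sum_(i < d) a i *: b i) ->
        forall i, a i = 0).

Definition M1_gens (K : fieldType) (n : nat) : seq {mpoly K[n]} :=
  [seq 'X_i ^+ n | i : 'I_n <- enum 'I_n] ++
  [seq 'X_i ^+ (n - 1) * 'X_j ^+ (n - 1) |
     i : 'I_n <- enum 'I_n, j : 'I_n <- [seq j : 'I_n <- enum 'I_n | (nat_of_ord i < nat_of_ord j)%N]].

(* Signless Laplacian of the complete graph K_{n+1} on {0,..,n}:
   diagonal = degree = n, off-diagonal = number of edges = 1. *)
Definition signless_laplacian_K (n : nat) : 'M[int]_(n.+1) :=
  \matrix_(i, j) (if i == j then n%:Z else 1).

(* Reduced: delete the row and column of vertex 0. *)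
Definition reduced_signless_laplacian_K (n : nat) : 'M[int]_n :=
  \matrix_(i, j) signless_laplacian_K n (lift ord0 i) (lift ord0 j).

(* Main.v *)
Require Import Defs.
From HB Require Import structures.
From mathcomp Require Import all_boot all_order all_algebra.
From mathcomp Require Import mpoly.
From mathcomp Require Import zify ring.
Set Implicit Arguments. Unset Strict Implicit. Unset Printing Implicit Defensive.
Import GRing.Theory Num.Theory.
Local Open Scope ring_scope.

Section Ideal.
Variables (K : fieldType) (n : nat) (gens : seq {mpoly K[n]}).

Lemma in_ideal0 : in_ideal gens 0.
Proof. by exists (fun _ => 0); rewrite big1 // => i _; rewrite mul0r. Qed.

Lemma in_idealD p q : in_ideal gens p -> in_ideal gens q -> in_ideal gens (p + q).
Proof.
move=> [c1 ->] [c2 ->]; exists (fun i => c1 i + c2 i).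
by rewrite -big_split /=; apply: eq_bigr => i _; rewrite mulrDl.
Qed.

Lemma in_idealMl q p : in_ideal gens p -> in_ideal gens (q * p).
Proof.
move=> [c ->]; exists (fun i => q * c i).
by rewrite mulr_sumr; apply: eq_bigr => i _; rewrite mulrA.
Qed.

Lemma in_ideal_mem p : p \in gens -> in_ideal gens p.
Proof.
move=> hp; have hi : (index p gens < size gens)%N by rewrite index_mem.
exists (fun i => if val i == index p gens then 1 else 0).
rewrite (bigD1 (Ordinal hi)) //= eqxx mul1r big1 ?addr0 ?nth_index //.
move=> i hne; case: eqP => [h|]; last by rewrite mul0r.
by move: hne; rewrite -val_eqE /= h eqxx.
Qed.

Lemma in_ideal_sum (I : eqType) (r : seq I) (F : I -> {mpoly K[n]}) :
  (forall i, i \in r -> in_ideal gens (F i)) -> in_ideal gens (\sum_(i <- r) F i).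
Proof.
elim: r => [|x r IH] h; first by rewrite big_nil; exact: in_ideal0.
rewrite big_cons; apply: in_idealD; first by apply: h; rewrite inE eqxx.
by apply: IH => i hi; apply: h; rewrite inE hi orbT.
Qed.

Lemma coefMX_eq0 (c : {mpoly K[n]}) g m : ~~ (g <= m)%MM -> (c * 'X_[g])@_m = 0.
Proof.
move=> hg; apply/eqP; rewrite mcoeff_eq0; apply/negP.
rewrite (perm_mem (msuppMX c g)) => /mapP [m' _ hm].
by move: hg; rewrite hm lem_addr.
Qed.

Variables (T : finType) (e : T -> 'X_{1..n}) (einj : injective e).

Lemma pick_sum (a : 'I_#|T| -> K) t :
  \sum_(i < #|T|) a i * (e (enum_val i) == e t)%:R = a (enum_rank t).
Proof.
rewrite (bigD1 (enum_rank t)) //= enum_rankK eqxx mulr1 big1 ?addr0 //.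
move=> i hi; case: eqP => [/einj h|]; last by rewrite mulr0.
by move: hi; rewrite -h enum_valK eqxx.
Qed.

Lemma quot_dim_monomial
  (hmono : forall p, p \in gens -> exists2 g, p = 'X_[g] & forall t, ~~ (g <= e t)%MM)
  (hcov : forall m, (forall t, e t != m) -> exists2 g, 'X_[g] \in gens & (g <= m)%MM) :
  quot_dim gens #|T|.
Proof.
exists (fun i => 'X_[e (enum_val i)]); split.
  move=> p; exists (fun i => p@_(e (enum_val i))).
  set q := p - _.
  have hq : forall t, q@_(e t) = 0.
    move=> t; rewrite /q mcoeffB raddf_sum /=.
    under eq_bigr => i _ do rewrite mcoeffZ mcoeffX.
    by rewrite pick_sum enum_rankK subrr.
  rewrite (mpolyE q); apply: in_ideal_sum => m; rewrite mcoeff_msupp => hm.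
  have : forall t, e t != m.
    by move=> t; apply/eqP => het; move: hm; rewrite -het hq eqxx.
  move=> /hcov [g hg hle].
  rewrite -(submK hle) mpolyXD mpoly_scaleAl.
  by apply: in_idealMl; apply: in_ideal_mem.
move=> a [c hc] j.
have := congr1 (mcoeff (e (enum_val j))) hc.
rewrite !raddf_sum /=.
under eq_bigr => i _ do rewrite mcoeffZ mcoeffX.
rewrite pick_sum enum_valK => ->.
rewrite big1 // => k _.
have [g hg hng] := hmono _ (mem_nth 0 (ltn_ord k)).
by rewrite hg coefMX_eq0.
Qed.

End Ideal.
Section Spec.
Variable n : nat.
Definition Tstd := ({ffun 'I_n -> 'I_(n-1)} + ('I_n * {ffun 'I_(n.-1) -> 'I_(n-1)}))%type.

Definition estd (t : Tstd) : 'X_{1..n} :=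
  match t with
  | inl f => [multinom (f i : nat) | i < n]
  | inr (k, g) => [multinom (if unlift k i is Some j then (g j : nat) else (n-1)%N) | i < n]
  end.

Lemma estd_inl f i : estd (inl f) i = f i.
Proof. by rewrite /= mnmE. Qed.

Lemma estd_inr k g i : estd (inr (k, g)) i = if unlift k i is Some j then (g j : nat) else (n-1)%N.
Proof. by rewrite /= mnmE. Qed.

Lemma estd_le t i : (estd t i <= n - 1)%N.
Proof.
case: t => [f|[k g]]; first by rewrite estd_inl ltnW.
by rewrite estd_inr; case: unlift => [j|] //; rewrite ltnW.
Qed.

Lemma estd_two t i j : i != j -> (n - 1 <= estd t i)%N -> (estd t j < n - 1)%N.
Proof.
case: t => [f|[k g]] hij; first by rewrite estd_inl leqNgt ltn_ord.
rewrite !estd_inr; case: (unliftP k i) => [i' _|hi].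
  by rewrite leqNgt ltn_ord.
case: (unliftP k j) => [j' _|hj]; first by rewrite ltn_ord.
by rewrite hi hj eqxx in hij.
Qed.

Lemma estd_inj : injective estd.
Proof.
have inl_inr : forall f k g, estd (inl f) <> estd (inr (k, g)).
  move=> f k g /mnmP /(_ k); rewrite estd_inl estd_inr unlift_none => h.
  by move: (ltn_ord (f k)); rewrite h ltnn.
case=> [f|[k g]] [f'|[k' g']] h.
- congr inl; apply/ffunP => i; apply/val_inj.
  by move/mnmP: h => /(_ i); rewrite !estd_inl.
- by case: (inl_inr _ _ _ h).
- by case: (inl_inr _ _ _ (esym h)).
- have hk : k = k'.
    apply/eqP; apply/negP => /negP hne; move/mnmP: h => /(_ k).
    rewrite !estd_inr unlift_none; case: (unliftP k' k) => [j _|hk].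
      by move=> h; move: (ltn_ord (g' j)); rewrite -h ltnn.
    by rewrite hk eqxx in hne.
  subst k'; congr (inr (_, _)); apply/ffunP => j; apply/val_inj.
  by move/mnmP: h => /(_ (lift k j)); rewrite !estd_inr liftK.
Qed.

Lemma estd_surj (m : 'X_{1..n}) : (forall i, m i <= n - 1)%N ->
  (forall i j, i != j -> n - 1 <= m i -> m j < n - 1)%N -> exists t, estd t = m.
Proof.
move=> hle htwo.
case: (boolP [exists i, n - 1 <= m i]%N) => [/existsP [k hk]|hno].
  have hg : forall j, (m (lift k j) < n - 1)%N.
    by move=> j; apply: (htwo k) => //; rewrite neq_lift.
  exists (inr (k, [ffun j => Ordinal (hg j)])); apply/mnmP => i.
  rewrite estd_inr; case: (unliftP k i) => [j ->|->]; first by rewrite ffunE.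
  by apply/eqP; rewrite eqn_leq hk hle.
have hf : forall i, (m i < n - 1)%N.
  by move=> i; rewrite ltnNge; apply/negP => h; move/existsP: hno; apply; exists i.
by exists (inl [ffun i => Ordinal (hf i)]); apply/mnmP => i; rewrite estd_inl ffunE.
Qed.

Lemma card_Tstd : #|{: Tstd}| = ((n - 1) ^ n + n * (n - 1) ^ n.-1)%N.
Proof. by rewrite card_sum card_prod !card_ffun !card_ord. Qed.

End Spec.

Section Gens.
Variables (K : fieldType) (n : nat) (hn : (1 <= n)%N).

Lemma gens_mono p : p \in M1_gens K n ->
  exists2 g, p = 'X_[g] & forall t, ~~ (g <= estd t)%MM.
Proof.
rewrite mem_cat => /orP [/mapP [i _ ->] | /allpairsPdep [i [j [_ hj ->]]]].
  exists (U_(i) *+ n)%MM; first by rewrite mpolyXn.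
  move=> t; apply/negP => /mnm_lepP /(_ i); rewrite mulmnE mnm1E eqxx mul1n.
  move=> h; have := leq_trans h (estd_le t i); case: n hn => // n' _.
  by rewrite subn1 /= ltnn.
rewrite mem_filter in hj; case/andP: hj => hij _.
exists (U_(i) *+ (n - 1) + U_(j) *+ (n - 1))%MM.
  by rewrite mpolyXD !mpolyXn.
move=> t; apply/negP => /mnm_lepP hle.
have hi := hle i; have hj := hle j.
rewrite !mnmDE !mulmnE !mnm1E !eqxx in hi hj.
have hne : i != j by rewrite -val_eqE /= neq_ltn hij.
have hne' : j != i by rewrite eq_sym.
rewrite (negbTE hne') mul1n mul0n addn0 in hi.
rewrite (negbTE hne) mul1n mul0n add0n in hj.
by have := estd_two hne hi; rewrite ltnNge hj.
Qed.

Lemma gens_cov (m : 'X_{1..n}) : (forall t, estd t != m) ->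
  exists2 g, 'X_[g] \in M1_gens K n & (g <= m)%MM.
Proof.
move=> hnot.
case: (boolP [exists i, n <= m i]%N) => [/existsP [i hi]|hno1].
  exists (U_(i) *+ n)%MM.
    by rewrite -mpolyXn mem_cat; apply/orP; left; apply: map_f; rewrite mem_enum.
  apply/mnm_lepP => l; rewrite mulmnE mnm1E.
  by case: eqP => [<-|_]; rewrite ?mul1n ?mul0n.
have hle : forall i, (m i <= n - 1)%N.
  move=> i; have h2 : ~~ (n <= m i)%N.
    by apply/negP => h; move/existsP: hno1; apply; exists i.
  move: h2; rewrite -ltnNge; lia.
case: (boolP [exists i, exists j, [&& (nat_of_ord i < nat_of_ord j)%N, (n - 1 <= m i)%N & (n - 1 <= m j)%N]]) => [|hno2].
  move=> /existsP [i /existsP [j /and3P [hij hi hj]]].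
  exists (U_(i) *+ (n - 1) + U_(j) *+ (n - 1))%MM.
    rewrite mpolyXD -!mpolyXn mem_cat; apply/orP; right.
    apply/allpairsPdep; exists i, j; split => //; first by rewrite mem_enum.
    by rewrite mem_filter hij mem_enum.
  have hne : i != j by rewrite -val_eqE /= neq_ltn hij.
  apply/mnm_lepP => l; rewrite mnmDE !mulmnE !mnm1E.
  have hne' : j != i by rewrite eq_sym.
  case: (eqVneq i l) => [<-|hil]; first by rewrite (negbTE hne') mul1n mul0n addn0.
  case: (eqVneq j l) => [<-|hjl]; first by rewrite mul0n mul1n add0n.
  by rewrite !mul0n.
have [t ht] : exists t, estd t = m.
  apply: estd_surj => // i j hij hi; rewrite ltnNge; apply/negP => hj.
  move/negP: hno2; apply.
  case: (ltngtP i j) => [lt|gt|eq].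
  - by apply/existsP; exists i; apply/existsP; exists j; rewrite lt hi hj.
  - by apply/existsP; exists j; apply/existsP; exists i; rewrite gt hi hj.
  - by move: hij; rewrite -val_eqE /= eq eqxx.
by move: (hnot t); rewrite ht eqxx.
Qed.

Lemma quot_dim_M1 : quot_dim (M1_gens K n) #|{: Tstd n}|.
Proof.
apply: (@quot_dim_monomial K n (M1_gens K n) (Tstd n) (@estd n) (@estd_inj n)).
  exact: gens_mono.
exact: gens_cov.
Qed.

End Gens.
Section Det.
Variable m : nat.
Definition Am : 'M[int]_m.+1 := \matrix_(i, j) (if i == j then (m.+1)%:Z else 1).
Definition Nm : 'M[int]_m.+1 := \matrix_(i, j) ((i != ord0) && (j == ord0))%:R.

Lemma lift0_neq (k : 'I_m) : (lift ord0 k == ord0 :> 'I_m.+1) = false.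
Proof. by rewrite -val_eqE. Qed.

Lemma mulNmE (X : 'M[int]_m.+1) i j : (Nm *m X) i j = (i != ord0)%:R * X ord0 j.
Proof.
rewrite !mxE big_ord_recl /= mxE eqxx andbT big1 ?addr0 // => k _.
by rewrite mxE lift0_neq andbF mul0r.
Qed.

Lemma mulmNE (X : 'M[int]_m.+1) i j :
  (X *m Nm) i j = (j == ord0)%:R * \sum_(k < m) X i (lift ord0 k).
Proof.
rewrite !mxE big_ord_recl mxE eqxx /= mulr0 add0r mulr_sumr.
by apply: eq_bigr => k _; rewrite mxE lift0_neq /= mulrC.
Qed.

Lemma det_1N (s : bool) : \det ((1%:M : 'M[int]_m.+1) + (-1) ^+ s *: Nm) = 1.
Proof.
rewrite det_trig.
  rewrite big1 // => i _; rewrite !mxE eqxx /=.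
  by case: (i == ord0); rewrite ?andbF ?andbT /= ?mulr0 ?addr0 // mulr0 addr0.
apply/is_trig_mxP => i j hij; rewrite !mxE.
have -> : (i == j) = false by apply/negbTE; rewrite -val_eqE /= neq_ltn hij.
have -> : (j == ord0) = false by apply/negbTE; rewrite -val_eqE /= -lt0n (leq_ltn_trans _ hij).
by rewrite andbF mulr0 addr0.
Qed.


Definition Ym := Am - Nm *m Am.

Lemma liftE (r c : 'I_m) : (lift ord0 r == lift ord0 c :> 'I_m.+1) = (r == c).
Proof. exact: (inj_eq (@lift_inj _ ord0)). Qed.

Lemma YmE i j : Ym i j = Am i j - (i != ord0)%:R * Am ord0 j.
Proof. by rewrite /Ym -mulNmE !mxE. Qed.

Lemma Ym_sum i : \sum_(k < m) Ym i (lift ord0 k) = m%:Z.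
Proof.
case: (unliftP ord0 i) => [i' ->|->].
  under eq_bigr => k _ do rewrite YmE !mxE liftE eq_sym lift0_neq /=.
  rewrite (bigD1 i') //= eqxx big1 ?addr0.
    by rewrite mul1r; lia.
  by move=> k hk; rewrite (negbTE hk) mul1r subrr.
under eq_bigr => k _ do rewrite YmE !mxE eq_sym lift0_neq eqxx /= mul0r subr0.
by rewrite sumr_const card_ord; lia.
Qed.

Definition Bm := Ym + Ym *m Nm.

Lemma BmE i j : Bm i j = Ym i j + (j == ord0)%:R * m%:Z.
Proof. by have h := mulmNE Ym i j; rewrite Ym_sum in h; rewrite /Bm -h !mxE. Qed.

Lemma Bm00 : Bm ord0 ord0 = (2 * m + 1)%:Z.
Proof.
rewrite BmE YmE !mxE eqxx /= mul0r subr0 mul1r.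
lia.
Qed.

Lemma Bm_lift r c : Bm (lift ord0 r) c = if c == lift ord0 r then m%:Z else 0.
Proof.
rewrite BmE YmE !mxE lift0_neq /= mul1r.
case: (unliftP ord0 c) => [c' ->|->].
  rewrite -!val_eqE /= /bump /= !eqn_add2l mul0r addr0.
  by case: eqP => h1; case: eqP => h2; lia.
by rewrite -!val_eqE /= /bump /= mul1r; lia.
Qed.

Lemma det_Bm : \det Bm = ((2 * m + 1) * m ^ m)%:Z.
Proof.
rewrite -det_tr det_trig.
  have tE : forall i j, Bm^T i j = Bm j i by move=> i j; rewrite mxE.
  rewrite big_ord_recl tE Bm00.
  under eq_bigr => k _ do rewrite tE Bm_lift eqxx.
  by rewrite prodr_const card_ord PoszM -!natz natrX.
apply/is_trig_mxP => i j hij.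
have tE : forall i j, Bm^T i j = Bm j i by move=> i' j'; rewrite mxE.
rewrite tE.
case: (unliftP ord0 j) => [j' hj|hj]; last by rewrite hj in hij.
rewrite hj Bm_lift; case: eqP => // hi; by rewrite hi hj ltnn in hij.
Qed.

Lemma det_Am : \det Am = ((2 * m + 1) * m ^ m)%:Z.
Proof.
rewrite -det_Bm /Bm /Ym.
have -> : Am - Nm *m Am + (Am - Nm *m Am) *m Nm = (1%:M + (-1) ^+ true *: Nm) *m Am *m (1%:M + (-1) ^+ false *: Nm).
  rewrite expr1 expr0 scaleN1r scale1r !(mulmxBl, mulmxDl, mulmxBr, mulmxDr, mul1mx, mulmx1) !mulNmx.
  by [].
by rewrite !det_mulmx !det_1N mul1r mulr1.
Qed.

End Det.

Unset Implicit Arguments.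

Theorem corollary3p4 (K : fieldType) (n : nat) (hn : (1 <= n)%N) :
  exists d : nat, quot_dim (M1_gens K n) d /\
    d%:Z = \det (reduced_signless_laplacian_K n).
Proof.
exists #|{: Tstd n}|; split; first exact: quot_dim_M1.
case: n hn => // m _.
have -> : reduced_signless_laplacian_K m.+1 = Am m.
  by apply/matrixP => i j; rewrite !mxE (inj_eq (@lift_inj _ ord0)).
rewrite det_Am card_Tstd; congr Posz.
rewrite subn1 /= expnS; nia.
Qed.
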